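(* Let $G$ be a finite group, $\rho:G\to SO(n)$ a faithful real representation, and $L=F(G)$ the Fitting subgroup of $G$. Let $U=\mathbb{R}^n$ with $G$-action via $\rho$, $U^L$ the $L$-fixed subspace, $U_L$ its orthogonal complement, and $\rho_L: G\to O(\dim U_L)$ the subrepresentation on $U_L$. Let $K=\ker\rho_L$. Then the Fitting subgroup $F(K)$ of $K$ is trivial.
   Context: The Fitting subgroup $F(X)$ of a finite group $X$ is its unique largest nilpotent normal subgroup. *)

(* Defs.v *)
From HB Require Import structures.
From mathcomp Require Import all_boot all_order all_algebra all_fingroup all_solvable.
From mathcomp Require Import mxrepresentation.
From mathcomp Require Import reals.
Set Implicit Arguments. Unset Strict Implicit. Unset Printing Implicit Defensive.
Import GRing.Theory.
Local Open Scope ring_scope.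

(* Real representations act on row vectors: v |-> v *m rG g.  The standard
   inner product on 'rV_n is <u, v> = u *m v^T. *)

Definition in_SO (R : realType) n (A : 'M[R]_n) : Prop :=
  A *m A^T = 1%:M /\ \det A = 1.

(* Orthogonal complement (w.r.t. the standard inner product) of the row
   space of W: the row space of kermx W^T = { v | v *m W^T = 0 }. *)
Definition orth_compl (R : realType) m n (W : 'M[R]_(m, n)) : 'M[R]_n :=
  kermx W^T.

Definition U_L (R : realType) (gT : finGroupType) (G : {group gT}) n
  (rG : mx_representation R G n) : 'M[R]_n :=
  orth_compl (rfix_mx rG 'F(G)%g).

Definition K_L (R : realType) (gT : finGroupType) (G : {group gT}) n
  (rG : mx_representation R G n) : {group gT} :=
  rstab_group rG (U_L rG).

(* Main.v *)
Require Import Defs.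
From HB Require Import structures.
From mathcomp Require Import all_boot all_order all_algebra all_fingroup all_solvable.
From mathcomp Require Import mxrepresentation.
From mathcomp Require Import reals.
Set Implicit Arguments. Unset Strict Implicit. Unset Printing Implicit Defensive.
Import GRing.Theory Num.Theory.
Local Open Scope ring_scope.

Lemma real_mx_tr0 (R : realType) m n (v : 'M[R]_(m, n)) : v *m v^T = 0 -> v = 0.
Proof.
move=> h; apply/matrixP=> i j; rewrite mxE.
have := congr1 (fun M : 'M[R]_m => M i i) h; rewrite !mxE => hs.
have H0 : forall k, true -> 0 <= v i k * v^T k i.
  by move=> k _; rewrite mxE -expr2 sqr_ge0.
have := @psumr_eq0P _ _ _ _ H0 hs j isT; rewrite mxE.
by move/eqP; rewrite mulf_eq0 orbb => /eqP.
Qed.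

Theorem proposition2p7 (R : realType) (gT : finGroupType) (G : {group gT}) (n : nat)
  (rG : mx_representation R G n) :
  mx_faithful rG ->
  (forall g, g \in G -> in_SO (rG g)) ->
  ('F(K_L rG))%g = 1%g.
Proof.
move=> faith SO.
set W := rfix_mx rG 'F(G)%g.
have modW : mxmodule rG W := normal_rfix_mx_module rG (Fitting_normal G).
have modU : mxmodule rG (U_L rG).
  apply/mxmoduleP => x Gx.
  have Ox : (rG x)^T = rG (x^-1)%g.
    have h1 : (rG x)^T *m rG x = 1%:M by apply: mulmx1C; case: (SO x Gx).
    rewrite -[LHS]mulmx1 -(repr_mx1 rG) -(@mulgV _ x) repr_mxM ?groupV //.
    by rewrite mulmxA h1 mul1mx.
  have WB : (W *m rG (x^-1)%g <= W)%MS by apply: (mxmoduleP modW); rewrite groupV.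
  apply/sub_kermxP.
  rewrite -mulmxA.
  have -> : rG x *m W^T = (W *m (rG x)^T)^T by rewrite (trmx_mul W) trmxK.
  rewrite Ox -(mulmxKpV WB) trmx_mul mulmxA mulmxA.
  have -> : U_L rG *m W^T = 0 by apply/sub_kermxP; exact: submx_refl.
  by rewrite !mul0mx.
have nK : (K_L rG <| G)%g := rstab_normal modU.
have sFK : ('F(K_L rG) \subset 'F(G))%g :=
  Fitting_max (char_normal_trans (Fitting_char _) nK) (Fitting_nil _).
apply/trivgP; apply: subset_trans faith; apply/subsetP=> x Fx.
have Kx : x \in K_L rG := subsetP (Fitting_sub _) x Fx.
have Gx : x \in G := subsetP (rstab_sub _ _) x Kx.
have hW : W *m rG x = W := rfix_mx_id rG (subsetP sFK x Fx).
have hU : U_L rG *m rG x = U_L rG.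
  by move: Kx; rewrite inE => /andP[_ /eqP].
have c0 : (W :&: U_L rG)%MS = 0.
  apply: real_mx_tr0.
  have [D hD] := submxP (capmxSl W (U_L rG)).
  have : (W :&: U_L rG <= U_L rG)%MS := capmxSr _ _.
  move/sub_kermxP => h.
  by rewrite [X in _ *m X^T]hD (trmx_mul D) mulmxA h mul0mx.
have rk : \rank (W + U_L rG)%MS = n.
  have := mxrank_sum_cap W (U_L rG).
  rewrite c0 mxrank0 addn0 => ->.
  rewrite /U_L /orth_compl mxrank_ker mxrank_tr.
  by rewrite subnKC // rank_leq_col.
have full : (1%:M <= col_mx W (U_L rG))%MS by rewrite -addsmxE sub1mx /row_full rk.
have [D hD] := submxP full.
apply/rkerP; split=> //.
by rewrite -[rG x]mul1mx {1}hD -mulmxA mul_col_mx hW hU -hD.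
Qed.
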